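(* Work in Scenario 1. For a profile of reported types $\mathbf t=(t_1,\dots,t_n)\in T$ (all bidders participating) and $i,j\in N$ with $j\ne i$, define $$W_j(\mathbf t)=v_j-\sum_{k\in N\setminus\{j\}}\eta_{k\leftarrow j},\qquad W_j^{-i}(\mathbf t)=v_j-\sum_{k\in N\setminus\{i,j\}}\eta_{k\leftarrow j},$$ where $\eta_{k\leftarrow j}$ is the value reported by bidder $k$. Consider the mechanism $x_j(\mathbf t)=\mathbf 1\{W_j(\mathbf t)\ge 0\}$ for all $j$; $$p_i(\mathbf t)=\sum_{j\in N\setminus\{i\}}\Big[W_j^{-i}(\mathbf t)\big(\mathbf 1\{W_j^{-i}(\mathbf t)\ge0\}-\mathbf 1\{W_j(\mathbf t)\ge0\}\big)+\eta_{j\leftarrow i}\,\mathbf 1\{W_i(\mathbf t)\ge0\}\Big];$$ and, when bidder $i$ does not participate, $x_i(\emptyset,\mathbf t_{-i})=p_i(\emptyset,\mathbf t_{-i})=0$ and $x_j(\emptyset,\mathbf t_{-i})=\mathbf 1\{W_j^{-i}(\mathbf t)\ge0\}$ for $j\neq i$. Then: (a) for every $\mathbf t\in T$, $\mathbf x(\mathbf t)$ maximizes the social welfare $\mathrm{SW}(\mathbf z;\mathbf t)=\sum_{i\in N}\nu_i(\mathbf z)$ over $\mathbf z\in[0,1]^n$; (b) the mechanism is DSIC; (c) it is ex-post IR; (d) $p_i(\mathbf t)\ge0$ for all $i\in N$ and $\mathbf t\in T$.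
   Context: Model: there are $n$ bidders $N=\{1,\dots,n\}$ and a seller of a freely replicable good; an allocation is any $\mathbf x=(x_1,\dots,x_n)\in[0,1]^n$ (no constraint coupling coordinates). Bidder $i$ has a value $v_i\in[\underline v_i,\bar v_i]\subset\mathbb R_{\ge0}$ and, for each $j\ne i$, an externality parameter $\eta_{i\leftarrow j}\in[\underline\eta_{i\leftarrow j},\bar\eta_{i\leftarrow j}]\subset\mathbb R_{\ge0}$; her valuation is $\nu_i(\mathbf x)=v_ix_i-\sum_{j\ne i}\eta_{i\leftarrow j}x_j$ and her utility with payment $p_i$ is $u_i(\mathbf x,p_i;\mathbf t)=\nu_i(\mathbf x)-p_i$ (evaluated at the true parameters). In Scenario 1, bidder $i$'s private type is $t_i=(v_i,(\eta_{i\leftarrow j})_{j\ne i})\in T_i=[\underline v_i,\bar v_i]\times\prod_{j\ne i}[\underline\eta_{i\leftarrow j},\bar\eta_{i\leftarrow j}]$; $T=\prod_iT_i$. Bids lie in $B_i=T_i\cup\{\emptyset\}$ ($\emptyset$ = non-participation). A mechanism is an allocation function $\mathbf x:B\to[0,1]^n$ and payment function $\mathbf p:B\to\mathbb R^n_{\ge0}$ with $x_i=p_i=0$ whenever bidder $i$ bids $\emptyset$; it is specified on bid profiles with at most one $\emptyset$. DSIC: for all $\mathbf t,\hat{\mathbf t}\in T$ and $i$, $u_i(\mathbf x(t_i,\hat{\mathbf t}_{-i}),p_i(t_i,\hat{\mathbf t}_{-i});\mathbf t)\ge u_i(\mathbf x(\hat{\mathbf t}),p_i(\hat{\mathbf t});\mathbf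 t)$. Ex-post IR: for all $\mathbf t\in T$ and $i$, $u_i(\mathbf x(\mathbf t),p_i(\mathbf t);\mathbf t)\ge u_i(\mathbf x(\emptyset,\mathbf t_{-i}),p_i(\emptyset,\mathbf t_{-i});\mathbf t)$. *)

(* Defs.v *)
From HB Require Import structures.
From mathcomp Require Import all_boot all_order all_algebra.
Set Implicit Arguments. Unset Strict Implicit. Unset Printing Implicit Defensive.
Import Order.TTheory GRing.Theory Num.Theory.
Local Open Scope ring_scope.

(* A (reported) type profile of n bidders is a pair (v, eta) with
   v i = v_i and eta i j = eta_{i <- j} (for j <> i; eta i i is never used). *)

Section Defs.
Variable R : realFieldType.
Variable n : nat.
Implicit Types (v : 'I_n -> R) (eta : 'I_n -> 'I_n -> R) (z : 'I_n -> R).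

Definition ind (b : bool) : R := if b then 1 else 0.

Definition valuation v eta (i : 'I_n) z : R :=
  v i * z i - \sum_(j < n | j != i) eta i j * z j.

Definition SW v eta z : R := \sum_(i < n) valuation v eta i z.

Definition W v eta (j : 'I_n) : R := v j - \sum_(k < n | k != j) eta k j.

Definition Wm v eta (i j : 'I_n) : R :=
  v j - \sum_(k < n | (k != i) && (k != j)) eta k j.

Definition alloc v eta : 'I_n -> R := fun j => ind (0 <= W v eta j).

Definition pay v eta (i : 'I_n) : R :=
  \sum_(j < n | j != i)
     (Wm v eta i j * (ind (0 <= Wm v eta i j) - ind (0 <= W v eta j))
      + eta j i * ind (0 <= W v eta i)).

Definition alloc_out v eta (i : 'I_n) : 'I_n -> R :=
  fun j => if j == i then 0 else ind (0 <= Wm v eta i j).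

Definition pay_out v eta (i : 'I_n) : R := 0.

Definition utility v eta (i : 'I_n) (x : 'I_n -> R) (p : R) : R :=
  valuation v eta i x - p.

Definition inT (vlo vhi : 'I_n -> R) (elo ehi : 'I_n -> 'I_n -> R) v eta : Prop :=
  forall i : 'I_n, vlo i <= v i <= vhi i /\
    (forall j : 'I_n, j != i -> elo i j <= eta i j <= ehi i j).

Definition updv (i : 'I_n) v vh : 'I_n -> R :=
  fun k => if k == i then v k else vh k.
Definition upde (i : 'I_n) eta etah : 'I_n -> 'I_n -> R :=
  fun k => if k == i then eta k else etah k.

End Defs.

(* Main.v *)
Require Import Defs.
From HB Require Import structures.
From mathcomp Require Import all_boot all_order all_algebra.
From mathcomp Require Import ring lra.
Import Order.TTheory GRing.Theory Num.Theory.
Local Open Scope ring_scope.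

Section Aux.
Variable R : realFieldType.
Variable n : nat.

Lemma ind_best (b : bool) (x : R) : ind _ b * x <= ind _ (0 <= x) * x.
Proof.
rewrite /ind; case: b; case: (lerP 0 x) => h; lra.
Qed.

Lemma ind_ge0 (b : bool) : 0 <= ind R b.
Proof. by rewrite /ind; case: b. Qed.

Lemma W_split (v : 'I_n -> R) e (i j : 'I_n) : j != i ->
  W v e j = Wm v e i j - e i j.
Proof.
move=> hij; rewrite /W /Wm (bigD1 i) /=; last by rewrite eq_sym.
rewrite (eq_bigl (fun k => (k != i) && (k != j))); first by ring.
by move=> k /=; rewrite andbC.
Qed.

Lemma SW_eq (v : 'I_n -> R) e z : SW v e z = \sum_(j < n) z j * W v e j.
Proof.
rewrite /SW /valuation /W sumrB.
have -> : \sum_(i < n) \sum_(j < n | j != i) e i j * z j =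
          \sum_(j < n) \sum_(i < n | i != j) e i j * z j.
  under eq_bigr do rewrite big_mkcond /=.
  rewrite exchange_big /=; apply: eq_bigr => j _.
  by rewrite [RHS]big_mkcond /=; apply: eq_bigr => i _; rewrite eq_sym.
rewrite -sumrB; apply: eq_bigr => j _.
rewrite mulrBr mulr_sumr; congr (_ - _); first exact: mulrC.
by apply: eq_bigr => k _; rewrite mulrC.
Qed.

Lemma util_expand (v : 'I_n -> R) e v' e' i :
  utility v e i (alloc v' e') (pay v' e' i) =
  ind _ (0 <= W v' e' i) * (v i - \sum_(j < n | j != i) e' j i)
  + \sum_(j < n | j != i) ind _ (0 <= W v' e' j) * (Wm v' e' i j - e i j)
  - \sum_(j < n | j != i) Wm v' e' i j * ind _ (0 <= Wm v' e' i j).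
Proof.
rewrite /utility /valuation /pay /alloc big_split /= -mulr_suml.
have -> : \sum_(j < n | j != i) ind _ (0 <= W v' e' j) * (Wm v' e' i j - e i j)
  = \sum_(j < n | j != i) ind _ (0 <= W v' e' j) * Wm v' e' i j
    - \sum_(j < n | j != i) e i j * ind _ (0 <= W v' e' j).
  by rewrite -sumrB; apply: eq_bigr => j _; ring.
have -> : \sum_(j < n | j != i) Wm v' e' i j *
            (ind _ (0 <= Wm v' e' i j) - ind _ (0 <= W v' e' j))
  = \sum_(j < n | j != i) Wm v' e' i j * ind _ (0 <= Wm v' e' i j)
    - \sum_(j < n | j != i) ind _ (0 <= W v' e' j) * Wm v' e' i j.
  by rewrite -sumrB; apply: eq_bigr => j _; ring.
ring.
Qed.

End Aux.

Theorem mainTheorem3 (R : realFieldType) (n : nat)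
  (vlo vhi : 'I_n -> R) (elo ehi : 'I_n -> 'I_n -> R)
  (hvlo : forall i, 0 <= vlo i) (hv : forall i, vlo i <= vhi i)
  (helo : forall i j, j != i -> 0 <= elo i j)
  (he : forall i j, j != i -> elo i j <= ehi i j) :
  (* (a) efficiency *)
  (forall v eta, inT vlo vhi elo ehi v eta ->
     forall z : 'I_n -> R, (forall j, 0 <= z j <= 1) ->
       SW v eta z <= SW v eta (alloc v eta)) /\
  (* (b) DSIC *)
  (forall v eta vh etah,
     inT vlo vhi elo ehi v eta -> inT vlo vhi elo ehi vh etah ->
     forall i : 'I_n,
       utility v eta i (alloc vh etah) (pay vh etah i)
       <= utility v eta i (alloc (updv i v vh) (upde i eta etah))
                          (pay (updv i v vh) (upde i eta etah) i)) /\
  (* (c) ex-post IR *)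
  (forall v eta, inT vlo vhi elo ehi v eta ->
     forall i : 'I_n,
       utility v eta i (alloc_out v eta i) (pay_out v eta i)
       <= utility v eta i (alloc v eta) (pay v eta i)) /\
  (* (d) nonnegative payments *)
  (forall v eta, inT vlo vhi elo ehi v eta ->
     forall i : 'I_n, 0 <= pay v eta i).
Proof.
have eta0 : forall v eta, inT vlo vhi elo ehi v eta ->
    forall i j, j != i -> 0 <= eta i j.
  move=> v eta hT i j hji; have [_ /(_ j hji) /andP[h _]] := hT i.
  exact: le_trans (helo i j hji) h.
split.
  move=> v eta _ z hz; rewrite !SW_eq; apply: ler_sum => j _.
  rewrite /alloc /ind; have /andP[h0 h1] := hz j.
  case: (lerP 0 (W v eta j)) => h; nra.
split.
  move=> v eta vh etah _ _ i.
  rewrite !util_expand.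
  set vs := updv i v vh; set es := upde i eta etah.
  have hWm : forall j, j != i -> Wm vs es i j = Wm vh etah i j.
    move=> j hj; rewrite /Wm /vs /es /updv /upde (negbTE hj); congr (_ - _).
    by apply: eq_bigr => k /andP[hk _]; rewrite (negbTE hk).
  have hsum : \sum_(j < n | j != i) es j i = \sum_(j < n | j != i) etah j i.
    by apply: eq_bigr => j hj; rewrite /es /upde (negbTE hj).
  have hWi : W vs es i = v i - \sum_(j < n | j != i) etah j i.
    by rewrite /W -hsum /vs /updv eqxx.
  have hWj : forall j, j != i -> W vs es j = Wm vh etah i j - eta i j.
    move=> j hj; rewrite (W_split _ _ _ _ _ _ hj) hWm //.
    by rewrite /es /upde eqxx.
  rewrite hsum hWi.
  have e1 : \sum_(j < n | j != i) Wm vs es i j * ind _ (0 <= Wm vs es i j)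
     = \sum_(j < n | j != i) Wm vh etah i j * ind _ (0 <= Wm vh etah i j).
    by apply: eq_bigr => j hj; rewrite hWm.
  have e2 : \sum_(j < n | j != i) ind _ (0 <= W vs es j) * (Wm vs es i j - eta i j)
     = \sum_(j < n | j != i) ind _ (0 <= Wm vh etah i j - eta i j) *
      (Wm vh etah i j - eta i j).
    by apply: eq_bigr => j hj; rewrite hWj // hWm.
  rewrite e1 e2.
  have h1 := ind_best _ (0 <= W vh etah i) (v i - \sum_(j < n | j != i) etah j i).
  have h2 : \sum_(j < n | j != i) ind _ (0 <= W vh etah j) * (Wm vh etah i j - eta i j)
     <= \sum_(j < n | j != i) ind _ (0 <= Wm vh etah i j - eta i j) *
      (Wm vh etah i j - eta i j).
    by apply: ler_sum => j _; apply: ind_best.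
  lra.
split.
  move=> v eta hT i; rewrite util_expand /utility /valuation /pay_out /alloc_out.
  rewrite eqxx mulr0 sub0r subr0.
  rewrite (eq_bigr (fun j => eta i j * ind _ (0 <= Wm v eta i j))
      (P := fun j => j != i)); last by move=> j hj; rewrite (negbTE hj).
  have hWi : W v eta i = v i - \sum_(j < n | j != i) eta j i by [].
  rewrite -hWi.
  have h1 := ind_best R true (W v eta i).
  have h2 : \sum_(j < n | j != i) Wm v eta i j * ind _ (0 <= Wm v eta i j)
      - \sum_(j < n | j != i) eta i j * ind _ (0 <= Wm v eta i j)
      <= \sum_(j < n | j != i) ind _ (0 <= W v eta j) * (Wm v eta i j - eta i j).
    rewrite -sumrB; apply: ler_sum => j hj.
    rewrite -(W_split _ _ _ _ _ _ hj).
    have := ind_best _ (0 <= Wm v eta i j) (W v eta j).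
    rewrite (W_split _ _ _ _ _ _ hj); lra.
  have h0 : 0 <= ind R (0 <= W v eta i) * W v eta i.
    by rewrite /ind; case: (lerP 0 (W v eta i)) => h; lra.
  lra.
move=> v eta hT i; rewrite /pay; apply: sumr_ge0 => j hj.
apply: addr_ge0; last first.
  by apply: mulr_ge0; [apply: (eta0 _ _ hT) ; rewrite eq_sym | apply: ind_ge0].
have hW := W_split _ _ v eta _ _ hj.
have he0 := eta0 _ _ hT i j hj.
rewrite /ind; case: (lerP 0 (Wm v eta i j)) => h1; case: (lerP 0 (W v eta j)) => h2; nra.
Qed.
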